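(* Let $[r:s]\in\mathbb{P}^1$, $X=\{u_1x=v_1y,\ u_2z=v_2t,\ w^2+r(x+y)^2+r(z+t)^2=(2s+2)(xt+yz)+(2s-2)(xz+yt)\}\subset\mathbb{P}^1\times\mathbb{P}^1\times\mathbb{P}^4$, and let $\mathbf{G}\subset\mathrm{Aut}(X)$ be generated by $\Gamma$ and $\tau_1,\tau_2,\tau_3$. If $[r:s]\neq[\pm1:1]$, then $X$ has no $\mathbf{G}$-fixed points. If $[r:s]=[\pm1:1]$, then the only $\mathbf{G}$-fixed point of $X$ is the singular point $([1:1],[1:1],[1:1:\pm1:\pm1:0])$ (with the same sign as in $[r:s]$).
   Context: Coordinates are $([u_1:v_1],[u_2:v_2],[x:y:z:t:w])$. $\tau_1\colon([u_1:v_1],[u_2:v_2],[x:y:z:t:w])\mapsto([v_1:u_1],[v_2:u_2],[y:x:t:z:w])$, $\tau_2\colon\mapsto([u_2:v_2],[u_1:v_1],[z:t:x:y:w])$, $\tau_3\colon\mapsto([u_1:v_1],[u_2:v_2],[x:y:z:t:-w])$. $\Gamma\cong\mathbb{C}^\ast$ is the subgroup of $\mathrm{Aut}(X)$ obtained by lifting to $X$ (via the blow up $X\to Q$ of the quadric $Q\subset\mathbb{P}^4$ with the same equation along $Q\cap\{x=y=0\}$ and $Q\cap\{z=t=0\}$) the action on $\mathbb{P}^4$ by the matrices $$\begin{pmatrix}\frac{1+\lambda}{2}&\frac{1-\lambda}{2}&0&0&0\\ \frac{1-\lambda}{2}&\frac{1+\lambda}{2}&0&0&0\\ 0&0&\frac{\lambda+1}{2\lambda}&\frac{\lambda-1}{2\lambda}&0\\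 0&0&\frac{\lambda-1}{2\lambda}&\frac{\lambda+1}{2\lambda}&0\\ 0&0&0&0&1\end{pmatrix},\quad\lambda\in\mathbb{C}^\ast,$$ acting on $[x:y:z:t:w]$, which preserves $Q$ and both planes. *)

(* Defs.v *)
From mathcomp Require Import all_boot all_algebra.
From mathcomp Require Import complex reals.
Set Implicit Arguments. Unset Strict Implicit. Unset Printing Implicit Defensive.
Import GRing.Theory.
Local Open Scope ring_scope.

Section Defs.
Variable R : realType.
Local Notation C := (R[i]).

(* Homogeneous coordinates of a point ([u1:v1],[u2:v2],[x:y:z:t:w])
   of P^1 x P^1 x P^4. *)
Record pt := Pt { pu1 : C; pv1 : C; pu2 : C; pv2 : C;
                  px : C; py : C; pz : C; pt_ : C; pw : C }.

Definition valid (p : pt) : Prop :=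
  ~ (pu1 p = 0 /\ pv1 p = 0) /\ ~ (pu2 p = 0 /\ pv2 p = 0) /\
  ~ (px p = 0 /\ py p = 0 /\ pz p = 0 /\ pt_ p = 0 /\ pw p = 0).

Definition peq (p q : pt) : Prop :=
  exists a b c : C, a != 0 /\ b != 0 /\ c != 0 /\
    pu1 q = a * pu1 p /\ pv1 q = a * pv1 p /\
    pu2 q = b * pu2 p /\ pv2 q = b * pv2 p /\
    px q = c * px p /\ py q = c * py p /\ pz q = c * pz p /\
    pt_ q = c * pt_ p /\ pw q = c * pw p.

Definition F1 (p : pt) : C := pu1 p * px p - pv1 p * py p.
Definition F2 (p : pt) : C := pu2 p * pz p - pv2 p * pt_ p.
Definition F3 (r s : C) (p : pt) : C :=
  let: Pt _ _ _ _ x y z t w := p in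
  w ^+ 2 + r * (x + y) ^+ 2 + r * (z + t) ^+ 2
  - ((2 * s + 2) * (x * t + y * z) + (2 * s - 2) * (x * z + y * t)).

Definition onX (r s : C) (p : pt) : Prop :=
  valid p /\ F1 p = 0 /\ F2 p = 0 /\ F3 r s p = 0.

Definition jac_row (r s : C) (p : pt) (i : 'I_3) : 9.-tuple C :=
  let: Pt u1 v1 u2 v2 x y z t w := p in
  match val i with
  | 0%N => [tuple x; - y; 0; 0; u1; - v1; 0; 0; 0]
  | 1%N => [tuple 0; 0; z; - t; 0; 0; u2; - v2; 0]
  | _ => [tuple 0; 0; 0; 0;
      2 * r * (x + y) - (2 * s + 2) * t - (2 * s - 2) * z;
      2 * r * (x + y) - (2 * s + 2) * z - (2 * s - 2) * t;
      2 * r * (z + t) - (2 * s + 2) * y - (2 * s - 2) * x;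
      2 * r * (z + t) - (2 * s + 2) * x - (2 * s - 2) * y;
      2 * w]
  end.

Definition jacobian (r s : C) (p : pt) : 'M[C]_(3, 9) :=
  \matrix_(i < 3, j < 9) tnth (jac_row r s p i) j.

(* p is a singular point of the threefold X (complete intersection of
   three hypersurfaces): p lies on X and the Jacobian has rank < 3. *)
Definition singular_pt (r s : C) (p : pt) : Prop :=
  onX r s p /\ (\rank (jacobian r s p) < 3)%N.

Definition tau1 (p : pt) : pt :=
  let: Pt u1 v1 u2 v2 x y z t w := p in Pt v1 u1 v2 u2 y x t z w.
Definition tau2 (p : pt) : pt :=
  let: Pt u1 v1 u2 v2 x y z t w := p in Pt u2 v2 u1 v1 z t x y w.
Definition tau3 (p : pt) : pt :=
  let: Pt u1 v1 u2 v2 x y z t w := p in Pt u1 v1 u2 v2 x y z t (- w).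

(* the element gamma_l of Gamma (l <> 0): the given matrix on P^4, lifted
   to the P^1 factors (the point [u1:v1] corresponds to the line [x:y]=[v1:u1],
   [u2:v2] to [z:t]=[v2:u2]; the lift acts on these by the same 2x2 blocks) *)
Definition gamma (l : C) (p : pt) : pt :=
  let: Pt u1 v1 u2 v2 x y z t w := p in
  Pt (((1 - l) * v1 + (1 + l) * u1) / 2)
     (((1 + l) * v1 + (1 - l) * u1) / 2)
     (((l - 1) * v2 + (l + 1) * u2) / (2 * l))
     (((l + 1) * v2 + (l - 1) * u2) / (2 * l))
     (((1 + l) * x + (1 - l) * y) / 2)
     (((1 - l) * x + (1 + l) * y) / 2)
     (((l + 1) * z + (l - 1) * t) / (2 * l))
     (((l - 1) * z + (l + 1) * t) / (2 * l))
     w.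

(* Since the set of
   generators is closed under inverses (gamma_l^-1 = gamma_(1/l), tau_i^2 = 1),
   the generated group is the closure under identity and composition. *)
Inductive inG : (pt -> pt) -> Prop :=
  | inG_id : inG id
  | inG_gamma l f : l != 0 -> inG f -> inG (gamma l \o f)
  | inG_tau1 f : inG f -> inG (tau1 \o f)
  | inG_tau2 f : inG f -> inG (tau2 \o f)
  | inG_tau3 f : inG f -> inG (tau3 \o f).

Definition Gfixed (p : pt) : Prop := forall g, inG g -> peq p (g p).

End Defs.

(* Main.v *)
Require Import Defs.
From mathcomp Require Import all_boot all_algebra.
From mathcomp Require Import complex reals ring.
Import GRing.Theory Num.Theory.
Local Open Scope ring_scope.

Section K.
Variable R : realType.
Local Notation C := (R[i]).

Lemma two_nz : (2:C) != 0. Proof. by rewrite pnatr_eq0. Qed.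
Lemma three_nz : (3:C) != 0. Proof. by rewrite pnatr_eq0. Qed.

Lemma key (r s : C) (p : pt R) : onX r s p -> Gfixed p ->
  exists k : C, (k = 1 \/ k = -1) /\ r = k * s /\ px p != 0 /\
    py p = px p /\ pz p = k * px p /\ pt_ p = k * px p /\ pw p = 0.
Proof.
case: p => u1 v1 u2 v2 x y z t w [[_ [_ hv]] [_ [_ hF]]] hG; rewrite /= in hv hF *.
have [_ [_ [c [_ [_ [_ [_ [_ [_ [_ [g5 [g6 [g7 [g8 _]]]]]]]]]]]]]] :=
  hG _ (@inG_gamma R 2 id two_nz (inG_id R)).
have [_ [_ [k [_ [_ [_ [_ [_ [_ [_ [t5 [t6 [t7 [t8 _]]]]]]]]]]]]]] :=
  hG _ (@inG_tau2 R id (inG_id R)).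
have [_ [_ [m [_ [_ [_ [_ [_ [_ [_ [m5 [m6 [m7 [m8 m9]]]]]]]]]]]]]] :=
  hG _ (@inG_tau3 R id (inG_id R)).
rewrite /= in g5 g6 g7 g8 t5 t6 t7 t8 m5 m6 m7 m8 m9.
have hb : (x - y) * (c - 2) = 0.
  transitivity (c * x - c * y - 2 * (x - y)); first ring.
  rewrite -g5 -g6; by field.
have hd : (z - t) * (2 * c - 1) = 0.
  transitivity (2 * (c * z - c * t) - (z - t)); first ring.
  rewrite -g7 -g8; by field.
have hdb : z - t = k * (x - y) by rewrite t5 t6; ring.
have hbd : x - y = k * (z - t) by rewrite t7 t8; ring.
have b0 : x - y = 0.
  have : 3 * (x - y) = 0.
    transitivity ((x - y) * (2 * c - 1) - 2 * ((x - y) * (c - 2))); first ring.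
    by rewrite hb mulr0 subr0 {1}hbd -mulrA hd mulr0.
  by move/eqP; rewrite mulf_eq0 (negbTE three_nz) /= => /eqP.
have d0 : z - t = 0 by rewrite hdb b0 mulr0.
have yx : y = x by apply/eqP; rewrite eq_sym -subr_eq0 b0.
have tz : t = z by apply/eqP; rewrite eq_sym -subr_eq0 d0.
have zk : z = k * x by [].
have xk : x = k * z by [].
have x0 : x != 0.
  apply/eqP => x0.
  have z0 : z = 0 by rewrite zk x0 mulr0.
  move: hF; rewrite /F3 x0 yx x0 tz z0 => hF.
  have w0 : w = 0.
    have : w ^+ 2 = 0 by rewrite -hF; ring.
    by move/eqP; rewrite expf_eq0 /= => /eqP.
  apply: hv; rewrite yx x0 tz z0 w0; done.
have m1 : m = 1.
  apply/eqP; rewrite -subr_eq0.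
  have : (m - 1) * x = 0 by rewrite mulrBl -m5 mul1r subrr.
  by move/eqP; rewrite mulf_eq0 (negbTE x0) orbF.
have w0 : w = 0.
  have : 2 * w = 0 by transitivity (w - (- w)); [ring | rewrite m9 m1 mul1r subrr].
  by move/eqP; rewrite mulf_eq0 (negbTE two_nz) /= => /eqP.
have kk : k ^+ 2 = 1.
  apply/eqP; rewrite -subr_eq0.
  have : (k ^+ 2 - 1) * x = 0.
    by rewrite mulrBl mul1r {2}xk zk mulrA -expr2 subrr.
  by move/eqP; rewrite mulf_eq0 (negbTE x0) orbF.
have k1 : k = 1 \/ k = -1.
  have : (k - 1) * (k + 1) = 0 by rewrite -subr_sqr expr1n kk subrr.
  move/eqP; rewrite mulf_eq0 => /orP [] /eqP h.
    by left; apply/eqP; rewrite -subr_eq0 h.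
  by right; apply/eqP; rewrite -subr_eq0 opprK h.
have rks : r = k * s.
  move: hF; rewrite /F3 yx tz zk w0 => hF.
  have : (8 * x ^+ 2) * (r - k * s) = 0.
    rewrite -hF.
    transitivity (8 * x ^+ 2 * (r - k * s) + 4 * r * x ^+ 2 * (k ^+ 2 - 1)).
      by rewrite kk subrr mulr0 addr0.
    ring.
  move/eqP; rewrite mulf_eq0 mulf_eq0 expf_eq0 (negbTE x0) andbF orbF.
  rewrite pnatr_eq0 /= subr_eq0 => /eqP //.
exists k; split=> //; split=> //; split=> //=.
by rewrite tz. Qed.

Definition Q (e a b c : C) : pt R := Pt a a b b c c (c * e) (c * e) 0.

Lemma Q_inv (e : C) (he : e = 1 \/ e = -1) g : inG g ->
  exists a b c, a != 0 /\ b != 0 /\ c != 0 /\ g (Q e 1 1 1) = Q e a b c.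
Proof.
have ee : e * e = 1 by case: he => ->; ring.
elim => [|l f hl _ [a [b [c [ha [hb [hc hf]]]]]]|f _ [a [b [c [ha [hb [hc hf]]]]]]
  |f _ [a [b [c [ha [hb [hc hf]]]]]]|f _ [a [b [c [ha [hb [hc hf]]]]]]].
- by exists 1, 1, 1; rewrite !oner_neq0.
- exists a, b, c; do 3 (split => //); rewrite /= hf /Q /=.
  have h2 := two_nz.
  by congr Pt; field; rewrite ?mulf_neq0.
- exists a, b, c; do 3 (split => //); by rewrite /= hf.
- exists b, a, (c * e); do 2 (split => //); split.
    by rewrite mulf_neq0 //; case: he => ->; rewrite ?oppr_eq0 oner_neq0.
  by rewrite /= hf /Q /=; congr Pt; rewrite -mulrA ee mulr1.
- exists a, b, c; do 3 (split => //); by rewrite /= hf /Q /= oppr0.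
Qed.
End K.

Theorem lemma5p1 (R : realType) (r s : R[i]) (hrs : ~ (r = 0 /\ s = 0)) :
  ((r <> s /\ r <> - s) ->
     forall p : pt R, onX r s p -> ~ Gfixed p) /\
  (forall e : R[i], (e = 1 \/ e = -1) -> r = e * s ->
     let P := Pt 1 1 1 1 1 1 e e 0 in
     onX r s P /\ Gfixed P /\ singular_pt r s P /\
     forall p : pt R, onX r s p -> Gfixed p -> peq p P).
Proof.
split.
  move=> [h1 h2] p hX hG.
  have [k [hk [rk _]]] := @key _ _ _ _ hX hG.
  by case: hk rk => -> rk; [apply: h1; rewrite rk mul1r | apply: h2; rewrite rk mulN1r].
move=> e he hr P.
have ee : e * e = 1 by case: he => ->; ring.
have hX : onX r s P.
  split; first by split; [|split]; case=> /eqP; rewrite oner_eq0.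
  rewrite /F1 /F2 /= hr; do 2 (split; first ring).
  transitivity (4 * e * s * (e * e - 1)); first ring.
  by rewrite ee subrr mulr0.
split => //; split.
  move=> g hg; have [a [b [c [ha [hb [hc hgP]]]]]] := @Q_inv _ _ he _ hg.
  have -> : P = Q _ e 1 1 1 by rewrite /P /Q mul1r.
  rewrite hgP; exists a, b, c; do 3 (split => //).
  by rewrite /Q /= !mulr1 mulr0 mul1r.
split.
  split => //.
  set A := jacobian r s P.
  have rowA : row 2 A = 0.
    apply/rowP => j; rewrite !mxE /=.
    case: j => [[|[|[|[|[|[|[|[|[|j]]]]]]]]] hj] //; rewrite (tnth_nth 0) /= ?hr.
    - by ring.
    - by ring.
    - by transitivity (4 * s * (e * e) - 4 * s); [ring|rewrite ee mulr1 subrr].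
    - by transitivity (4 * s * (e * e) - 4 * s); [ring|rewrite ee mulr1 subrr].
    - by ring.
  rewrite ltn_neqAle rank_leq_row andbT.
  apply/negP => /(mulmx_free_eq0 ('e_2 : 'rV_3)).
  rewrite -rowE rowA eqxx => /esym /eqP /matrixP /(_ 0 2).
  by rewrite !mxE /= => /eqP; rewrite oner_eq0.
case=> u1 v1 u2 v2 x y z t w hXp hGp.
have [k [hk [rk [x0 [/= yx [/= zk [/= tk /= w0]]]]]]] := @key _ _ _ _ hXp hGp.
move: hXp => [/= [hv1 [hv2 _]] [/= f1 [/= f2 _]]].
have s0 : s != 0 by apply/eqP => s0; apply: hrs; rewrite hr s0 mulr0.
have ke : k = e.
  apply/eqP; rewrite -subr_eq0.
  have : (k - e) * s = 0 by rewrite mulrBl -rk -hr subrr.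
  by move/eqP; rewrite mulf_eq0 (negbTE s0) orbF.
have k0 : k != 0 by case: hk => ->; rewrite ?oppr_eq0 oner_eq0.
have uv1 : u1 = v1.
  apply/eqP; rewrite -subr_eq0.
  have : (u1 - v1) * x = 0 by rewrite mulrBl -[in v1 * x]yx; exact: f1.
  by move/eqP; rewrite mulf_eq0 (negbTE x0) orbF.
have uv2 : u2 = v2.
  apply/eqP; rewrite -subr_eq0.
  have : (u2 - v2) * (k * x) = 0 by rewrite mulrBl -[in u2 * (k * x)]zk -tk; exact: f2.
  by move/eqP; rewrite mulf_eq0 (negbTE (mulf_neq0 k0 x0)) orbF.
have u10 : u1 != 0 by apply/eqP => h; apply: hv1; rewrite -uv1.
have u20 : u2 != 0 by apply/eqP => h; apply: hv2; rewrite -uv2.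
exists u1^-1, u2^-1, x^-1; rewrite !invr_eq0; do 3 (split => //).
rewrite /P /= -uv1 -uv2 yx zk tk w0 ke mulVf // mulVf //; do 4 (split => //).
by rewrite mulVf // mulrCA mulVf // mulr1 mulr0.
Qed.
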